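(* Let $(V,e)$ be a unital $\ast$-normed space and $\varepsilon>1/\|e\|$. Then $\|v\|_\varepsilon=\sup\{|\langle v,\varphi\rangle|:\varphi\in S_\varepsilon\}$, where $S_\varepsilon=V_{he}^\ast\cap\varepsilon\operatorname{ball}V^\ast$, defines a norm on $V$ equivalent to the original norm of $V$.
   Context: A $\ast$-normed space is a complex vector space with involution and norm satisfying $\|v^\ast\|=\|v\|$; $V^\ast$ has involution $\langle v,\varphi^\ast\rangle=\overline{\langle v^\ast,\varphi\rangle}$, $V_h^\ast$ is the set of hermitian bounded functionals, and for nonzero hermitian $e$, $V_{he}^\ast=\{y\in V_h^\ast:\langle e,y\rangle=1\}$. $(V,e)$ is a unital $\ast$-normed space if $V_{he}^\ast\cap\operatorname{ball}V^\ast\ne\varnothing$. *)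

(* Defs.v *)
From HB Require Import structures.
From mathcomp Require Import all_boot all_order all_algebra.
From mathcomp Require Import complex.
From mathcomp Require Import classical_sets reals.
Set Implicit Arguments.
Unset Strict Implicit.
Unset Printing Implicit Defensive.
Import Order.TTheory GRing.Theory Num.Theory.
Local Open Scope ring_scope.
Local Open Scope classical_set_scope.

Definition cmod (R : realType) (z : R[i]) : R := ComplexField.Normc.normc z.

Definition is_star_normed (R : realType) (V : lmodType R[i])
    (inv : V -> V) (nrm : V -> R) : Prop :=
  [/\ (forall v w : V, inv (v + w) = inv v + inv w),
      (forall (a : R[i]) (v : V), inv (a *: v) = Num.conj a *: inv v) &
      (forall v : V, inv (inv v) = v)] /\
  [/\ (forall v w : V, nrm (v + w) <= nrm v + nrm w),
      (forall (a : R[i]) (v : V), nrm (a *: v) = cmod a * nrm v),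
      (forall v : V, nrm v = 0 -> v = 0) &
      (forall v : V, nrm (inv v) = nrm v)].

Definition clinear (R : realType) (V : lmodType R[i]) (phi : V -> R[i]) : Prop :=
  forall (a : R[i]) (v w : V), phi (a *: v + w) = a * phi v + phi w.

Definition in_dual_ball (R : realType) (V : lmodType R[i]) (nrm : V -> R)
    (r : R) (phi : V -> R[i]) : Prop :=
  forall v : V, cmod (phi v) <= r * nrm v.

Definition bounded_functional (R : realType) (V : lmodType R[i]) (nrm : V -> R)
    (phi : V -> R[i]) : Prop :=
  clinear phi /\ exists M : R, in_dual_ball nrm M phi.

(* phi^* = phi, where <v, phi^*> = conj <v^*, phi> *)
Definition hermitian_functional (R : realType) (V : lmodType R[i]) (inv : V -> V)
    (phi : V -> R[i]) : Prop :=
  forall v : V, Num.conj (phi (inv v)) = phi v.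

Definition Vhe (R : realType) (V : lmodType R[i]) (inv : V -> V) (nrm : V -> R)
    (e : V) : set (V -> R[i]) :=
  [set phi | bounded_functional nrm phi /\ hermitian_functional inv phi /\ phi e = 1].

Definition S_eps (R : realType) (V : lmodType R[i]) (inv : V -> V) (nrm : V -> R)
    (e : V) (eps : R) : set (V -> R[i]) :=
  Vhe inv nrm e `&` in_dual_ball nrm eps.

Definition unital (R : realType) (V : lmodType R[i]) (inv : V -> V) (nrm : V -> R)
    (e : V) : Prop :=
  [/\ e != 0, inv e = e & S_eps inv nrm e 1 !=set0].

Definition eps_norm (R : realType) (V : lmodType R[i]) (inv : V -> V) (nrm : V -> R)
    (e : V) (eps : R) (v : V) : R :=
  sup [set cmod (phi v) | phi in S_eps inv nrm e eps].

(* Main.v *)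
Require Import Defs.
From HB Require Import structures.
From mathcomp Require Import all_boot all_order all_algebra.
From mathcomp Require Import complex.
From mathcomp Require Import boolp classical_sets reals.
From mathcomp Require Import ring lra.
Import Order.TTheory GRing.Theory Num.Theory.
Local Open Scope ring_scope.
Local Open Scope classical_set_scope.

Section Cx.
Variable R : realType.
Local Notation rc := (real_complex R).
Local Notation ii := ('i%C : R[i]).
Lemma conjR (r : R) : Num.conj (rc r) = rc r.
Proof. by apply/eqP; rewrite eq_complex /= oppr0 !eqxx. Qed.
Lemma conji : Num.conj ii = - ii.
Proof. by apply/eqP; rewrite eq_complex /= oppr0 !eqxx. Qed.
Lemma conjNi : Num.conj (- ii) = ii.
Proof. by apply/eqP; rewrite eq_complex /= !oppr0 opprK !eqxx. Qed.
Lemma iiM : ii * ii = -1.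
Proof. by rewrite -expr2 sqr_i. Qed.
Lemma Re_psi (a b : R) : complex.Re (rc a - ii * rc b) = a.
Proof. rewrite /=. ring. Qed.
Lemma cmod_conj (z : R[i]) : cmod (Num.conj z) = cmod z.
Proof. by case: z => a b; rewrite /cmod /= sqrrN. Qed.
Lemma cmodE (z : R[i]) : rc (cmod z) = `|z|.
Proof. by case: z. Qed.
Lemma cmod_ge0 (z : R[i]) : 0 <= cmod z.
Proof. by case: z => a b; rewrite /cmod /= sqrtr_ge0. Qed.
Lemma cmodM (z w : R[i]) : cmod (z * w) = cmod z * cmod w.
Proof. exact: ComplexField.Normc.normcM. Qed.
Lemma cmodV (z : R[i]) : cmod (z^-1) = (cmod z)^-1.
Proof. exact: ComplexField.Normc.normcV. Qed.
Lemma cmodD (z w : R[i]) : cmod (z + w) <= cmod z + cmod w.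
Proof. exact: le_normcD. Qed.
Lemma cmodN (z : R[i]) : cmod (- z) = cmod z.
Proof. exact: normcN. Qed.
Lemma cmod_eq0 (z : R[i]) : cmod z = 0 -> z = 0.
Proof. exact: ComplexField.Normc.eq0_normc. Qed.
Lemma conj_psi (a b : R) : Num.conj (rc a - ii * rc b) = rc a - ii * rc (- b).
Proof. apply/eqP; rewrite eq_complex /=; apply/andP; split; apply/eqP; ring. Qed.
Lemma cD (x y : R[i]) : Num.conj (x + y) = Num.conj x + Num.conj y.
Proof. by rewrite rmorphD. Qed.
Lemma cB (x y : R[i]) : Num.conj (x - y) = Num.conj x - Num.conj y.
Proof. by rewrite rmorphB. Qed.
Lemma cM (x y : R[i]) : Num.conj (x * y) = Num.conj x * Num.conj y.
Proof. by rewrite rmorphM. Qed.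
Lemma cmodB (z w : R[i]) : cmod (z - w) <= cmod z + cmod w.
Proof. by rewrite -(cmodN w); apply: cmodD. Qed.
Lemma cmodi : cmod ii = 1.
Proof. by rewrite /cmod /= expr0n expr1n add0r sqrtr1. Qed.
Lemma cmodNi : cmod (- ii) = 1.
Proof. by rewrite cmodN cmodi. Qed.
Lemma cmod1 : cmod (1 : R[i]) = 1.
Proof. exact: ComplexField.Normc.normc1. Qed.
End Cx.
Arguments cmodD {R}.
Arguments cmodB {R}.
Arguments cmod_ge0 {R}.
Arguments cmodM {R}.
Arguments cmod_eq0 {R}.

Section Lin.
Variable R : realType.
Variable V : lmodType R[i].
Lemma lin_add {phi : V -> R[i]} : clinear phi -> forall v w, phi (v + w) = phi v + phi w.
Proof. by move=> h v w; rewrite -{1}(scale1r v) h mul1r. Qed.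
Lemma lin0 {phi : V -> R[i]} : clinear phi -> phi 0 = 0.
Proof.
move=> h; apply: (addrI (phi 0)); rewrite addr0 -(lin_add h) addr0 //.


Qed.
Lemma lin_scale {phi : V -> R[i]} : clinear phi -> forall a v, phi (a *: v) = a * phi v.
Proof. by move=> h a v; rewrite -(addr0 (a *: v)) h lin0 // addr0. Qed.
Lemma lin_opp {phi : V -> R[i]} : clinear phi -> forall v, phi (- v) = - phi v.
Proof. by move=> h v; rewrite -scaleN1r (lin_scale h) mulN1r. Qed.
End Lin.
Arguments lin_opp {R V phi}.
Arguments lin_add {R V phi}.
Arguments lin0 {R V phi}.
Arguments lin_scale {R V phi}.

Section Basics.
Variable R : realType.
Variable V : lmodType R[i].
Variable inv : V -> V.
Variable nrm : V -> R.
Hypothesis hS : is_star_normed inv nrm.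

Local Notation rc := (real_complex R).
Local Notation ii := ('i%C : R[i]).

Lemma nrmD v w : nrm (v + w) <= nrm v + nrm w. Proof. by case: hS => _ [h _ _ _]; apply: h. Qed.
Lemma nrmZ a v : nrm (a *: v) = cmod a * nrm v. Proof. by case: hS => _ [_ h _ _]; apply: h. Qed.
Lemma nrm_eq0 v : nrm v = 0 -> v = 0. Proof. by case: hS => _ [_ _ h _]; apply: h. Qed.
Lemma nrm_inv v : nrm (inv v) = nrm v. Proof. by case: hS => _ [_ _ _ h]; apply: h. Qed.
Lemma invD v w : inv (v + w) = inv v + inv w. Proof. by case: hS => [[h _ _] _]; apply: h. Qed.
Lemma invZ a v : inv (a *: v) = Num.conj a *: inv v. Proof. by case: hS => [[_ h _] _]; apply: h. Qed.
Lemma invK v : inv (inv v) = v. Proof. by case: hS => [[_ _ h] _]; apply: h. Qed.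

Lemma cmod0 : cmod (0 : R[i]) = 0. Proof. exact: ComplexField.Normc.normc0. Qed.
Lemma cmodR (r : R) : cmod (rc r) = `|r|.
Proof. by rewrite /cmod /= expr0n /= addr0 sqrtr_sqr. Qed.
Lemma nrm0 : nrm 0 = 0.
Proof. by have := nrmZ 0 0; rewrite scale0r cmod0 mul0r. Qed.
Lemma nrmR (r : R) v : nrm (rc r *: v) = `|r| * nrm v.
Proof. by rewrite nrmZ cmodR. Qed.
Lemma nrmN v : nrm (- v) = nrm v.
Proof. by rewrite -scaleN1r -(rmorphN1 rc) nrmR normrN normr1 mul1r. Qed.
Lemma nrm_ge0 v : 0 <= nrm v.
Proof. by have := nrmD v (- v); rewrite subrr nrm0 nrmN; lra. Qed.

Definition rlin (f : V -> R) := (forall v w, f (v + w) = f v + f w) /\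
  (forall (r : R) v, f (rc r *: v) = r * f v).

Definition good (G : set (V * R)) :=
  [/\ (forall v a w b, G (v,a) -> G (w,b) -> G (v+w, a+b)),
      (forall r v a, G (v,a) -> G (rc r *: v, r*a)) &
      (forall v a, G (v,a) -> a <= nrm v)].

Lemma good_fun G : good G -> forall v a b, G (v,a) -> G (v,b) -> a = b.
Proof.
case=> Gadd Gsc Gdom v a b Ga Gb.
have h1 := Gdom _ _ (Gadd _ _ _ _ Ga (Gsc (-1) _ _ Gb)).
have h2 := Gdom _ _ (Gadd _ _ _ _ Gb (Gsc (-1) _ _ Ga)).
move: h1 h2; rewrite rmorphN1 scaleN1r subrr nrm0 => h1 h2; lra.
Qed.

Lemma HB (x : V) : exists f : V -> R, rlin f /\ (forall v, f v <= nrm v) /\ f x = nrm x.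
Proof.
pose G0 : set (V * R) := [set p | exists t : R, p = (rc t *: x, t * nrm x)].
pose P : set (set (V * R)) := [set G | G = set0 \/ (G0 `<=` G /\ good G)].
have G0good : good G0.
  split.
  - move=> v a w b [t [-> ->]] [s [-> ->]]; exists (t + s).
    by rewrite rmorphD scalerDl mulrDl.
  - move=> r v a [t [-> ->]]; exists (r * t).
    by rewrite rmorphM scalerA mulrA.
  - move=> v a [t [-> ->]]; rewrite nrmR; apply: ler_wpM2r; first exact: nrm_ge0.
    exact: ler_norm.
have G0n : G0 (0, 0) by exists 0; rewrite rmorph0 scale0r mul0r.
have hchain : forall F : set (set (V * R)), F `<=` P -> total_on F subset ->
    P (\bigcup_(X in F) X).
  move=> F FP Ftot.
  have [ne|e0] := pselect (exists p, (\bigcup_(X in F) X) p); last first.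
    by rewrite /P /=; left; apply/seteqP; split => // p Up; apply: e0; exists p.
  have hlp : forall Y, F Y -> forall q, Y q -> G0 `<=` Y /\ good Y.
    move=> Y FY q Yq; have [Y0|//] : Y = set0 \/ (G0 `<=` Y /\ good Y) := FP Y FY.
    by rewrite Y0 in Yq.
  rewrite /P /=; right; case: ne => p [X FX Xp].
  have [G0X _] := hlp X FX p Xp.
  split; first by move=> q G0q; exists X => //; exact: G0X.
  split.
  - move=> v a w b [Y FY Ya] [Z FZ Zb]; case: (Ftot _ _ FY FZ) => [YZ|ZY].
    + have [_ [gadd _ _]] := hlp Z FZ _ Zb; exists Z => //; exact: gadd (YZ _ Ya) Zb.
    + have [_ [gadd _ _]] := hlp Y FY _ Ya; exists Y => //; exact: gadd Ya (ZY _ Zb).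
  - move=> r v a [Y FY Ya]; have [_ [_ gs _]] := hlp Y FY _ Ya; exists Y => //; exact: gs.
  - move=> v a [Y FY Ya]; have [_ [_ _ gd]] := hlp Y FY _ Ya; exact: gd.
have [A [PA maxA]] := Zorn_bigcup hchain.
have [A0|[G0A gA]] : A = set0 \/ (G0 `<=` A /\ good A) := PA.
  exfalso; apply: (maxA G0); last by rewrite /P /=; right; split.
  rewrite A0; split; first by [].
  by move=> /(_ _ G0n).
have [Aadd Asc Adom] := gA.
have Afun := good_fun A gA.
have A00 : A (0, 0) := G0A _ G0n.
have total : forall y, exists a, A (y, a).
  move=> y; apply: contrapT => ny.
  pose L := [set z | exists d a, A (d, a) /\ z = a - nrm (d - y)].
  have LU : forall d a d' a', A (d, a) -> A (d', a') ->
      a - nrm (d - y) <= nrm (d' + y) - a'.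
    move=> d a d' a' Ha Ha'; have := Adom _ _ (Aadd _ _ _ _ Ha Ha').
    have := nrmD (d - y) (d' + y).
    rewrite addrCA subrK addrC => h1 h2; lra.
  have Lne : L !=set0 by exists (0 - nrm (0 - y)), 0, 0.
  have hsL : has_sup L.
    split => //; exists (nrm (0 + y) - 0) => z [d [a [Ha ->]]]; exact: LU Ha A00.
  pose c := sup L.
  have cL : forall d a, A (d, a) -> a - nrm (d - y) <= c.
    by move=> d a Ha; apply: sup_upper_bound => //; exists d, a.
  have cU : forall d a, A (d, a) -> c <= nrm (d + y) - a.
    move=> d a Ha; apply: ge_sup => // z [d' [a' [H ->]]]; exact: LU.
  pose B := [set p | exists d a t, A (d, a) /\ p = (d + rc t *: y, a + t * c)].
  have AB : A `<=` B.
    move=> [d a] Ha; exists d, a, 0; split => //.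
    by rewrite rmorph0 scale0r addr0 mul0r addr0.
  apply: (maxA B).
    split => // BA; have : B (y, c).
      exists 0, 0, 1; split => //.
      by rewrite rmorph1 scale1r add0r mul1r add0r.
    by move=> /BA Ayc; apply: ny; exists c.
  rewrite /P /=; right; split; first by move=> p /G0A /AB.
  split.
  - move=> v a w b [d1 [a1 [t1 [H1 E1]]]] [d2 [a2 [t2 [H2 E2]]]].
    case: E1 => -> ->; case: E2 => -> ->.
    exists (d1 + d2), (a1 + a2), (t1 + t2); split; first exact: Aadd.
    by rewrite rmorphD scalerDl addrACA; congr (_, _); ring.
  - move=> r v a [d [a' [t [H E]]]]; case: E => -> ->.
    exists (rc r *: d), (r * a'), (r * t); split; first exact: Asc.
    by rewrite scalerDr scalerA -rmorphM; congr (_, _); ring.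
  - move=> v a [d [a' [t [H E]]]]; case: E => -> ->.
    case: (ltrgt0P t) => [tp|tn|->].
    + have Hd := Asc (t^-1) _ _ H.
      have -> : d + rc t *: y = rc t *: (rc t^-1 *: d + y).
        by rewrite scalerDr scalerA -rmorphM mulfV ?gt_eqF // rmorph1 scale1r.
      rewrite nrmR gtr0_norm //.
      have := ler_wpM2l (ltW tp) (cU _ _ Hd).
      by rewrite mulrBr mulrA mulfV ?gt_eqF // mul1r; lra.
    + have tp : 0 < - t by rewrite oppr_gt0.
      have Hd := Asc ((- t)^-1) _ _ H.
      have -> : d + rc t *: y = rc (- t) *: (rc (- t)^-1 *: d - y).
        rewrite scalerDr scalerA -rmorphM mulfV ?gt_eqF // rmorph1 scale1r.
        by rewrite scalerN -scaleNr -rmorphN opprK.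
      rewrite nrmR gtr0_norm //.
      have := ler_wpM2l (ltW tp) (cL _ _ Hd).
      by rewrite mulrBr mulrA mulfV ?gt_eqF // mul1r; lra.
    + by rewrite rmorph0 scale0r addr0 mul0r addr0; exact: Adom.
have [f Hf] := choice total.
exists f; split; [split|split].
- by move=> v w; apply: (Afun (v + w)); [exact: Hf | exact: Aadd (Hf v) (Hf w)].
- by move=> r v; apply: Afun (Hf _) (Asc _ _ _ (Hf v)).
- by move=> v; exact: Adom (Hf v).
- apply: Afun (Hf x) _.
  have := G0A _ (ex_intro _ 1 erefl).
  by rewrite rmorph1 scale1r mul1r.
Qed.


Lemma herm_func (x : V) : inv x = x -> exists psi : V -> R[i],
  clinear psi /\ hermitian_functional inv psi /\
  (forall v, cmod (psi v) <= nrm v) /\ psi x = rc (nrm x).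
Proof.
move=> hx.
have [f [[fadd fsc] [fle fx]]] := HB x.
pose g v := (f v + f (inv v)) / 2.
have gadd : forall v w, g (v + w) = g v + g w.
  by move=> v w; rewrite /g invD !fadd; ring.
have gsc : forall (r : R) v, g (rc r *: v) = r * g v.
  by move=> r v; rewrite /g invZ conjR !fsc; ring.
have gle : forall v, g v <= nrm v.
  move=> v; rewrite /g; have := fle v; have := fle (inv v); rewrite nrm_inv; lra.
have ginv : forall v, g (inv v) = g v by move=> v; rewrite /g invK addrC.
have gN : forall v, g (- v) = - g v.
  by move=> v; rewrite -scaleN1r -(rmorphN1 rc) gsc mulN1r.
have gix : g (ii *: x) = 0.
  have := ginv (ii *: x); rewrite invZ conji hx scaleNr gN; lra.
pose psi v := rc (g v) - ii * rc (g (ii *: v)).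
have psiD : forall v w, psi (v + w) = psi v + psi w.
  by move=> v w; rewrite /psi scalerDr !gadd !rmorphD; ring.
have psiR : forall (r : R) v, psi (rc r *: v) = rc r * psi v.
  move=> r v; have e : ii *: (rc r *: v) = rc r *: (ii *: v) by rewrite !scalerA mulrC.
  rewrite /psi e !gsc !rmorphM; ring.
have psiI : forall v, psi (ii *: v) = ii * psi v.
  move=> v; rewrite /psi scalerA iiM scaleN1r gN rmorphN.
  by rewrite mulrBr mulrA iiM; ring.
have psi0 : psi 0 = 0.
  by rewrite /psi scaler0; have := gsc 0 0; rewrite rmorph0 scale0r mul0r => ->; rewrite rmorph0 mulr0 subr0.
have psilin : clinear psi.
  move=> a v w; rewrite {1}(complexE a) scalerDl -scalerA !psiD psiR psiI psiR.
  by rewrite [in RHS](complexE a); ring.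
exists psi; split; first exact: psilin.
split.
  move=> v; have e : ii *: inv v = inv (- ii *: v) by rewrite invZ conjNi.
  rewrite /psi e !ginv scaleNr gN.
  by rewrite conj_psi opprK.
split; last first.
  by rewrite /psi gix rmorph0 mulr0 subr0 /g hx fx; f_equal; lra.
move=> v.
have [z0|zn0] := eqVneq (psi v) 0.
  by rewrite z0 cmod0 nrm_ge0.
pose z := psi v.
have cz : 0 < cmod z.
  rewrite lt_neqAle cmod_ge0 andbT; apply/eqP => /esym/cmod_eq0 h.
  by move: zn0; rewrite -/z h eqxx.
pose u := Num.conj z / rc (cmod z).
have uz : psi (u *: v) = rc (cmod z).
  have := psilin u v 0; rewrite addr0 psi0 addr0 => ->.
  rewrite /u mulrAC -/z [Num.conj z * z]mulrC -normCK -cmodE expr2 mulrK //.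
  by rewrite unitfE; apply/eqP => /complexI; apply/eqP; rewrite gt_eqF.
have cu : cmod u = 1.
  by rewrite /u cmodM cmodV cmod_conj cmodR gtr0_norm // mulfV // (gt_eqF cz).
have := gle (u *: v); rewrite nrmZ cu mul1r.
have -> : g (u *: v) = complex.Re (psi (u *: v)) by rewrite /psi Re_psi.
by rewrite uz.
Qed.

End Basics.

Theorem corollary4p4 (R : realType) (V : lmodType R[i]) (inv : V -> V)
    (nrm : V -> R) (e : V) (eps : R) :
  is_star_normed inv nrm -> unital inv nrm e -> (nrm e)^-1 < eps ->
  (* the sup is taken over a bounded set *)
  (forall v : V, has_ubound [set cmod (phi v) | phi in S_eps inv nrm e eps]) /\
  (* ||.||_eps is a norm on V *)
  (forall v w : V, eps_norm inv nrm e eps (v + w)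
                   <= eps_norm inv nrm e eps v + eps_norm inv nrm e eps w) /\
  (forall (a : R[i]) (v : V), eps_norm inv nrm e eps (a *: v)
                              = cmod a * eps_norm inv nrm e eps v) /\
  (forall v : V, eps_norm inv nrm e eps v = 0 -> v = 0) /\
  (* equivalent to the original norm *)
  (exists c1 c2 : R, 0 < c1 /\ 0 < c2 /\
     forall v : V, c1 * nrm v <= eps_norm inv nrm e eps v
                   /\ eps_norm inv nrm e eps v <= c2 * nrm v).
Proof.
move=> hS [e0 inve _] heps.
have nD := @nrmD _ _ _ _ hS; have nZ := @nrmZ _ _ _ _ hS.
have nge0 := @nrm_ge0 _ _ _ _ hS; have nI := @nrm_inv _ _ _ _ hS.
have n0 := @nrm_eq0 _ _ _ _ hS.
have iD := @invD _ _ _ _ hS; have iZ := @invZ _ _ _ _ hS; have iK := @invK _ _ _ _ hS.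
have HF := @herm_func _ _ _ _ hS.
set S := S_eps inv nrm e eps.
set N := eps_norm inv nrm e eps.
have ne0 : 0 < nrm e.
  rewrite lt_neqAle nge0 andbT; apply/eqP => /esym /n0 h; by rewrite h eqxx in e0.
have [psie [psielin [psieh [psieb psiee]]]] := HF e inve.
pose a0 := (nrm e)^-1.
have a0p : 0 < a0 by rewrite invr_gt0.
have epsp : 0 < eps by exact: lt_trans heps.
have ea0 : nrm e * a0 = 1 by rewrite mulfV // gt_eqF.
pose phi1 v := real_complex R a0 * psie v.
have phi1b : forall v, cmod (phi1 v) <= a0 * nrm v.
  by move=> v; rewrite /phi1 cmodM cmodR gtr0_norm // ler_pM2l.
have phi1lin : clinear phi1 by move=> a v w; rewrite /phi1 psielin; ring.
have phi1h : hermitian_functional inv phi1.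
  by move=> v; rewrite /phi1 cM conjR psieh.
have phi1e : phi1 e = 1.
  by rewrite /phi1 psiee -rmorphM mulrC ea0 rmorph1.
have phi1S : S phi1.
  split; [split; [split|split] | ].
  - exact: phi1lin.
  - by exists a0.
  - exact: phi1h.
  - exact: phi1e.
  - move=> v; apply: le_trans (phi1b v) _; apply: ler_wpM2r; [exact: nge0 | exact: ltW].
have Sball : forall phi, S phi -> forall v, cmod (phi v) <= eps * nrm v.
  by move=> phi [_ b].
have Slin : forall phi, S phi -> clinear phi by move=> phi [[[]]].
have Sne : forall v, [set cmod (phi v) | phi in S] !=set0.
  by move=> v; exists (cmod (phi1 v)), phi1.
have Sub : forall v, has_ubound [set cmod (phi v) | phi in S].
  by move=> v; exists (eps * nrm v) => _ [phi Sphi <-]; exact: Sball.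
have le_N : forall phi v, S phi -> cmod (phi v) <= N v.
  move=> phi v Sphi; apply: sup_upper_bound; first by split; [exact: Sne|exact: Sub].
  by exists phi.
have N_le : forall v b, (forall phi, S phi -> cmod (phi v) <= b) -> N v <= b.
  by move=> v b hb; apply: ge_sup; first exact: Sne; move=> _ [phi Sphi <-]; exact: hb.
have N_ge0 : forall v, 0 <= N v.
  by move=> v; apply: le_trans (le_N phi1 v phi1S); exact: cmod_ge0.
have Nsc : forall a v, N (a *: v) <= cmod a * N v.
  move=> a v; apply: N_le => phi Sphi; rewrite (lin_scale (Slin _ Sphi)) cmodM.
  by apply: ler_wpM2l; [exact: cmod_ge0 | exact: le_N].
pose t := (eps - a0) / 2.
have tp : 0 < t by rewrite /t divr_gt0 // subr_gt0.
pose c1 := t / (2 * (2 + t * nrm e)).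
have c1p : 0 < c1.
  rewrite /c1 divr_gt0 // mulr_gt0 // addr_gt0 // mulr_gt0 //.
have lower : forall v, c1 * nrm v <= N v.
  move=> v.
  have invN : forall w, inv (- w) = - inv w.
    by move=> w; rewrite -scaleN1r iZ rmorphN1 scaleN1r.
  pose h := (2^-1)%:C%C *: (v + inv v).
  pose k := (2^-1)%:C%C *: (- ('i%C : R[i]) *: (v - inv v)).
  have hh : inv h = h by rewrite /h iZ conjR iD iK addrC.
  have hk : inv k = k.
    rewrite /k iZ conjR iZ conjNi iD invN iK; congr (_ *: _).
    by rewrite scaleNr -scalerN opprB addrC.
  have vhk : v = h + ('i%C : R[i]) *: k.
    rewrite /h /k !scalerA.
    have -> : ('i%C : R[i]) * (2^-1)%:C%C * - 'i%C = (2^-1)%:C%C.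
      by rewrite mulrAC mulrN iiM opprK mul1r.
    rewrite -scalerDr addrACA subrr addr0 -mulr2n -scaler_nat scalerA.
    have e2 : (2%:R : R[i]) = (2%:R)%:C%C by rewrite rmorph_nat.
    by rewrite e2 -rmorphM mulVf ?pnatr_eq0 // rmorph1 scale1r.
  have nvhk : nrm v <= nrm h + nrm k.
    by rewrite {1}vhk; apply: le_trans (nD _ _) _; rewrite (nZ ('i%C : R[i]) k) cmodi mul1r.
  have hk_bound : forall psi, clinear psi -> hermitian_functional inv psi ->
      cmod (psi h) <= cmod (psi v) /\ cmod (psi k) <= cmod (psi v).
    move=> psi pl ph.
    have hc : psi (inv v) = Num.conj (psi v) by have := ph (inv v); rewrite iK => ->.
    have h2 : 0 <= (2^-1 : R) by rewrite invr_ge0 ler0n.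
    have := cmodD (psi v) (Num.conj (psi v)); rewrite cmod_conj => hD.
    have := cmodB (psi v) (Num.conj (psi v)); rewrite cmod_conj => hB.
    split.
    - rewrite /h (lin_scale pl) (lin_add pl) hc cmodM cmodR ger0_norm //.
      rewrite -ler_pdivlMl ?invr_gt0 ?ltr0n // invrK; lra.
    - rewrite /k (lin_scale pl) (lin_scale pl) (lin_add pl) (lin_opp pl) hc.
      rewrite !cmodM cmodR cmodNi mul1r ger0_norm //.
      rewrite -ler_pdivlMl ?invr_gt0 ?ltr0n // invrK; lra.
  have [x [hx [xv xb]]] : exists x, inv x = x /\ nrm v <= 2 * nrm x /\
      (forall psi, clinear psi -> hermitian_functional inv psi ->
         cmod (psi x) <= cmod (psi v)).
    case: (lerP (nrm k) (nrm h)) => hkh; [exists h | exists k]; split => //;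
      (split; [lra | by move=> psi pl ph; have [] := hk_bound psi pl ph]).
  have [psi [pl [ph [pb px]]]] := HF x hx.
  have rcj : Num.conj (psi e) = psi e by have := ph e; rewrite inve.
  pose phi w := phi1 w + t%:C%C * (psi w - psi e * phi1 w).
  have phib : forall w, cmod (phi w) <= eps * nrm w.
    move=> w; rewrite /phi.
    have h1 := cmodD (phi1 w) (t%:C%C * (psi w - psi e * phi1 w)).
    rewrite cmodM cmodR (gtr0_norm tp) in h1.
    have h2 := cmodB (psi w) (psi e * phi1 w); rewrite cmodM in h2.
    have h3 : cmod (psi e) * cmod (phi1 w) <= nrm e * (a0 * nrm w).
      exact: ler_pM (cmod_ge0 _) (cmod_ge0 _) (pb e) (phi1b w).
    rewrite mulrA ea0 mul1r in h3.
    have h4 := pb w; have h5 := phi1b w.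
    have h6 : t * cmod (psi w - psi e * phi1 w) <= t * (nrm w + nrm w).
      by apply: ler_wpM2l; [exact: ltW | lra].
    have h7 : eps * nrm w = a0 * nrm w + t * (nrm w + nrm w) by rewrite /t; field.
    lra.
  have phiS : S phi.
    split; [split; [split|split] | ].
    - by move=> a w u; rewrite /phi phi1lin pl; ring.
    - by exists eps.
    - by move=> w; rewrite /phi cD phi1h cM conjR cB ph cM rcj phi1h.
    - by rewrite /phi phi1e mulr1 subrr mulr0 addr0.
    - exact: phib.
  have N1 := le_N phi1 v phi1S; have N2 := le_N phi v phiS.
  have d : phi v - phi1 v = t%:C%C * (psi v - psi e * phi1 v) by rewrite /phi; ring.
  have hd : t * cmod (psi v - psi e * phi1 v) <= N v + N v.
    rewrite -(gtr0_norm tp) -cmodR -cmodM -d; apply: le_trans (cmodB _ _) _; lra.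
  have hx1 : nrm x <= cmod (psi v).
    by have := xb psi pl ph; rewrite px cmodR ger0_norm.
  have hlow : cmod (psi v) <= cmod (psi v - psi e * phi1 v) + cmod (psi e) * cmod (phi1 v).
    by have := cmodD (psi v - psi e * phi1 v) (psi e * phi1 v); rewrite subrK cmodM.
  have h8 : cmod (psi e) * cmod (phi1 v) <= nrm e * N v.
    exact: ler_pM (cmod_ge0 _) (cmod_ge0 _) (pb e) N1.
  have h9 : t * (nrm x - nrm e * N v) <= t * cmod (psi v - psi e * phi1 v).
    by apply: ler_wpM2l; [exact: ltW | lra].
  have h10 : t * nrm v <= t * (2 * nrm x) by apply: ler_wpM2l; [exact: ltW | exact: xv].
  have Dp : 0 < 2 * (2 + t * nrm e) by rewrite mulr_gt0 // addr_gt0 // mulr_gt0.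
  rewrite /c1 mulrAC ler_pdivrMr //.
  have -> : N v * (2 * (2 + t * nrm e)) = 4 * N v + 2 * (t * (nrm e * N v)) by ring.
  rewrite mulrBr in h9; rewrite mulrCA in h10; lra.
split; first exact: Sub.
split.
  move=> v w; apply: N_le => phi Sphi; rewrite (lin_add (Slin _ Sphi)).
  apply: le_trans (cmodD _ _) _; apply: lerD; exact: le_N.
split.
  move=> a v; apply/eqP; rewrite eq_le Nsc /=.
  have [->|a0n] := eqVneq a 0.
    by rewrite cmod0 mul0r N_ge0.
  have := Nsc a^-1 (a *: v); rewrite scalerA mulVf // scale1r cmodV => h.
  have ca : 0 < cmod a.
    rewrite lt_neqAle cmod_ge0 andbT; apply/eqP => /esym/cmod_eq0 h'.
    by rewrite h' eqxx in a0n.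
  by rewrite -ler_pdivlMl // mulrC.
split.
  move=> v Nv0; apply: n0; apply/eqP; rewrite eq_le nge0 andbT.
  have := lower v; rewrite Nv0 => h.
  by rewrite -(pmulr_rle0 _ c1p).
exists c1, eps; split => //; split => // v; split; first exact: lower.
by apply: N_le => phi Sphi; exact: Sball.
Qed.
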